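(* Let $Q\subset V$ be a polytope and let $\mathscr V$ be the vertex set of some deformation of $Q$. Let $\mathrm{Def}(Q)|_{\mathscr V}=\{Q'\in\mathrm{Def}(Q): Q'\subseteq Q,\ \mathrm{Vert}(Q')\subseteq\mathscr V\}$, let $\min(\Sigma_Q^\vee)$ be the set of tangent cones of $Q$ at its vertices, let $X_{\mathscr V}=\{C+v: C\in\min(\Sigma_Q^\vee), v\in\mathscr V\}$, and define $\mathcal F_{\mathscr V}:\mathbb I(\mathrm{Def}(Q)|_{\mathscr V})\to\mathbb Z^{X_{\mathscr V}}$ by $\mathbf 1_P\mapsto\sum_{C+v\in X_{\mathscr V},\ C+v\text{ tightly contains }P}\mathbf e_{C+v}$. Then there is an injective $\mathbb Z$-linear map $\mathcal E_{\mathscr V}:\mathbb Z^{X_{\mathscr V}}\to\mathbb Z^{\oplus\mathrm{tran}(\Sigma_Q^\vee)}$ such that $\mathcal E_{\mathscr V}\circ\mathcal F_{\mathscr V}=\mathcal F\circ\iota$, where $\iota:\mathbb I(\mathrm{Def}(Q)|_{\mathscr V})\hookrightarrow\mathbb I(\mathrm{Def}^+(Q))$ is the inclusion and $\mathcal F:\mathbb I(\mathrm{Def}^+(Q))\to\mathbb Z^{\oplus\mathrm{tran}(\Sigma_Q^\vee)}$ is the map $\mathbf 1_P\mapsto\sum_{C+v\in\mathrm{tran}(\Sigma_Q^\vee),\ C+v\text{ tightly contains }P}\mathbf e_{C+v}$.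
   Context: $V$ is a finite-dimensional real vector space. $\mathbb I(\mathscr P)$ is the $\mathbb Z$-span in $\mathbb Z^V$ of indicator functions $\mathbf 1_P$, $P\in\mathscr P$. For a polyhedron $Q$, $\Sigma_Q$ is its outer normal fan; the tangent cone at a face $F$ is $C_F=\mathrm{Cone}(v'-v\mid v\in F,v'\in Q)$; $\Sigma_Q^\vee$ is the set of tangent cones and $\mathrm{tran}(\Sigma_Q^\vee)=\{C+v:C\in\Sigma_Q^\vee,v\in V\}$. $P$ is an extended deformation of $Q$ if each cone of $\Sigma_P$ is a union of cones of $\Sigma_Q$ ($\mathrm{Def}^+(Q)$ = set of these), and a deformation if moreover $\Sigma_P$ and $\Sigma_Q$ have the same support ($\mathrm{Def}(Q)$ = set of these). $C+v$ tightly contains $P$ if $P\subseteq C+v$ and $P\cap(\mathrm{lineal}(C)+v)\ne\emptyset$. $\mathbb Z^{X}$ has basis $\{\mathbf e_x\}$. *)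

(* Defs.v *)
From HB Require Import structures.
From mathcomp Require Import all_boot all_order all_algebra.
From mathcomp Require Import boolp classical_sets functions cardinality reals.
Set Implicit Arguments. Unset Strict Implicit. Unset Printing Implicit Defensive.
Import Order.TTheory GRing.Theory Num.Theory.
Local Open Scope classical_set_scope.
Local Open Scope ring_scope.

Section PolyDefs.
Variables (R : realType) (n : nat).
Notation V := 'rV[R]_n.

(* standard pairing, identifying V with its dual *)
Definition dotp (u x : V) : R := \sum_(i < n) u ord0 i * x ord0 i.

Definition polyhedron (P : set V) : Prop :=
  exists s : seq (V * R), P = [set x | forall p, p \in s -> dotp p.1 x <= p.2].

Definition bounded_set (P : set V) : Prop :=
  exists M : R, forall x, P x -> forall i, `|x ord0 i| <= M.

Definition polytope (P : set V) : Prop :=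
  [/\ polyhedron P, bounded_set P & P !=set0].

Definition face (P F : set V) : Prop :=
  (exists u : V, F = [set x | P x /\ forall y, P y -> dotp u y <= dotp u x])
  /\ F !=set0.

Definition ncone (P F : set V) : set V :=
  [set u | forall x y, F x -> P y -> dotp u y <= dotp u x].

Definition nfan (P : set V) : set (set V) :=
  [set N | exists F, face P F /\ N = ncone P F].

Definition fan_support (P : set V) : set V :=
  [set u | exists N, nfan P N /\ N u].

Definition coarsens (P Q : set V) : Prop :=
  forall N, nfan P N ->
    exists S : set (set V), S `<=` nfan Q /\ N = [set u | exists K, S K /\ K u].

Definition Defp (Q : set V) : set (set V) :=
  [set P | [/\ polyhedron P, P !=set0 & coarsens P Q]].
Definition Def (Q : set V) : set (set V) :=
  [set P | Defp Q P /\ fan_support P = fan_support Q].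

Definition Vert (P : set V) : set V := [set v | face P [set v]].

Definition Def_restr (Q VV : set V) : set (set V) :=
  [set P | [/\ Def Q P, P `<=` Q & Vert P `<=` VV]].

Definition cone_gen (S : set V) : set V :=
  [set x | exists s : seq (R * V),
     (forall p, p \in s -> 0 <= p.1 /\ S p.2) /\ x = \sum_(p <- s) p.1 *: p.2].

Definition tcone (Q F : set V) : set V :=
  cone_gen [set w | exists v v', [/\ F v, Q v' & w = v' - v]].

Definition dual_fan (Q : set V) : set (set V) :=
  [set C | exists F, face Q F /\ C = tcone Q F].
Definition min_dual_fan (Q : set V) : set (set V) :=
  [set C | exists v, face Q [set v] /\ C = tcone Q [set v]].

Definition translate (C : set V) (v : V) : set V := [set c + v | c in C].

Definition tran (Q : set V) : set (set V) :=
  [set K | exists C v, dual_fan Q C /\ K = translate C v].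

Definition XV (Q VV : set V) : set (set V) :=
  [set K | exists C v, [/\ min_dual_fan Q C, VV v & K = translate C v]].

Definition lineal (C : set V) : set V := [set x | C x /\ C (- x)].

Definition tightly_contains (Q K P : set V) : Prop :=
  exists C v, [/\ dual_fan Q C, K = translate C v, P `<=` K &
                  (P `&` translate (lineal C) v) !=set0].

Definition indic (P : set V) : V -> int := fun x => if `[< P x >] then 1 else 0.

Definition zspan (S : set (set V)) : set (V -> int) :=
  [set f | exists s : seq (int * set V), (forall p, p \in s -> S p.2) /\
             f = (fun x => \sum_(p <- s) p.1 * indic p.2 x)].

Definition tight_vec (Q : set V) (X : set (set V)) (P : set V) : set V -> int :=
  fun K => if `[< X K /\ tightly_contains Q K P >] then 1 else 0.

(* Z^X (all functions supported on X) and Z^{(+) X} (finitely supported on X) *)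
Definition ZX (X : set (set V)) : set (set V -> int) :=
  [set g | forall K, ~ X K -> g K = 0].
Definition ZXfin (X : set (set V)) : set (set V -> int) :=
  [set g | ZX X g /\ finite_set [set K | g K != 0]].

End PolyDefs.

(* Main.v *)
Require Import Defs.
From HB Require Import structures.
From mathcomp Require Import all_boot all_order all_algebra.
From mathcomp Require Import boolp classical_sets functions cardinality reals.
From mathcomp Require Import lra.
Import Order.TTheory GRing.Theory Num.Theory.
Local Open Scope classical_set_scope.
Local Open Scope ring_scope.
Set Implicit Arguments. Unset Strict Implicit. Unset Printing Implicit Defensive.

Section S.
Variables (R : realType) (n : nat).
Notation V := 'rV[R]_n.
Implicit Types (u x y : V).

Lemma dotpDr u x y : dotp u (x + y) = dotp u x + dotp u y.
Proof. by rewrite /dotp -big_split /=; apply: eq_bigr => i _; rewrite mxE mulrDr. Qed.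
Lemma dotpDl u x y : dotp (x + y) u = dotp x u + dotp y u.
Proof. by rewrite /dotp -big_split /=; apply: eq_bigr => i _; rewrite mxE mulrDl. Qed.
Lemma dotpZr c u x : dotp u (c *: x) = c * dotp u x.
Proof. by rewrite /dotp mulr_sumr; apply: eq_bigr => i _; rewrite mxE mulrCA. Qed.
Lemma dotp0r u : dotp u 0 = 0.
Proof. by rewrite /dotp big1 // => i _; rewrite mxE mulr0. Qed.
Lemma dotp0l u : dotp 0 u = 0.
Proof. by rewrite /dotp big1 // => i _; rewrite mxE mul0r. Qed.
Lemma dotpNr u x : dotp u (- x) = - dotp u x.
Proof. by rewrite -scaleN1r dotpZr mulN1r. Qed.
Lemma dotpBr u x y : dotp u (x - y) = dotp u x - dotp u y.
Proof. by rewrite dotpDr dotpNr. Qed.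


Lemma dotp_sumr u (I : Type) (l : seq I) (P : pred I) (F : I -> V) :
  dotp u (\sum_(i <- l | P i) F i) = \sum_(i <- l | P i) dotp u (F i).
Proof. exact: (big_morph (dotp u) (dotpDr u) (dotp0r u)). Qed.
Lemma dotp_suml u (I : Type) (l : seq I) (P : pred I) (F : I -> V) :
  dotp (\sum_(i <- l | P i) F i) u = \sum_(i <- l | P i) dotp (F i) u.
Proof.
elim: l => [|a l IH]; first by rewrite !big_nil dotp0l.
by rewrite !big_cons; case: (P a); rewrite ?dotpDl IH.
Qed.

Lemma cg0 (S : set V) : cone_gen S 0.
Proof. by exists [::]; split => //; rewrite big_nil. Qed.
Lemma cgD (S : set V) x y : cone_gen S x -> cone_gen S y -> cone_gen S (x + y).
Proof.
move=> [l1 [H1 ->]] [l2 [H2 ->]]; exists (l1 ++ l2); split; last by rewrite big_cat.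
by move=> p; rewrite mem_cat => /orP[/H1|/H2].
Qed.
Lemma cgZ (S : set V) c x : 0 <= c -> cone_gen S x -> cone_gen S (c *: x).
Proof.
move=> c0 [l [H ->]]; exists [seq (c * p.1, p.2) | p <- l]; split.
  move=> p /mapP[q /H [q1 q2] ->] /=; split => //; exact: mulr_ge0.
by rewrite big_map scaler_sumr; apply: eq_bigr => p _; rewrite scalerA.
Qed.
Lemma cg_gen (S : set V) x : S x -> cone_gen S x.
Proof.
move=> Sx; exists [:: (1, x)]; split; last by rewrite big_seq1 scale1r.
by move=> p; rewrite inE => /eqP -> /=.
Qed.
Lemma cg_mono (S S' : set V) : S `<=` S' -> cone_gen S `<=` cone_gen S'.
Proof. by move=> SS x [l [H ->]]; exists l; split => // p /H [? /SS]. Qed.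

Lemma translateP (C : set V) v x : translate C v x <-> C (x - v).
Proof.
split; first by move=> [c Cc <-]; rewrite addrK.
by move=> Cx; exists (x - v) => //; rewrite subrK.
Qed.

Definition is_cone (C : set V) :=
  [/\ C 0, forall x y, C x -> C y -> C (x + y) & forall x, C x -> C (2%:R *: x)].

Lemma cg_cone S : is_cone (cone_gen S).
Proof. by split; [exact: cg0|exact: cgD|move=> x; apply: cgZ]. Qed.

Lemma linealD (C : set V) x y : is_cone C -> lineal C x -> lineal C y -> lineal C (x + y).
Proof.
move=> [_ D _] [Cx Cx'] [Cy Cy']; split; first exact: D.
by rewrite opprD; exact: D.
Qed.
Lemma linealN (C : set V) x : lineal C x -> lineal C (- x).
Proof. by move=> [a b]; split => //; rewrite opprK. Qed.

Lemma translate_eq (C C' : set V) v v' : is_cone C -> is_cone C' ->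
  translate C v = translate C' v' -> C = C' /\ lineal C' (v' - v).
Proof.
move=> [C0 CD CZ] [C'0 C'D C'Z] E.
have HC x : C x <-> C' (x - (v' - v)).
  have ex : x - (v' - v) = x + v - v' by rewrite opprB addrA addrAC.
  rewrite ex; split => h.
    have : translate C v (x + v) by apply/translateP; rewrite addrK.
    by rewrite E => /translateP.
  have : translate C' v' (x + v) by apply/translateP.
  by rewrite -E => /translateP; rewrite addrK.
have md : C' (- (v' - v)) by rewrite -[X in C' X]add0r; apply/HC.
have d : C' (v' - v).
  have := CZ _ (proj2 (HC (v' - v)) _); rewrite subrr => /(_ C'0).
  move/HC; rewrite scaler_nat mulr2n addrK //.
split; last by split.
apply/seteqP; split => x.
  move/HC => h; have := C'D _ _ h d; by rewrite subrK.
move=> h; apply/HC; exact: C'D.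
Qed.

Lemma translate_shift (C : set V) v v' : is_cone C -> lineal C (v' - v) ->
  translate C v = translate C v'.
Proof.
move=> [_ CD _] [d md]; apply/seteqP; split => x /translateP h; apply/translateP.
  by have := CD _ _ h md; rewrite opprB addrA subrK.
by have := CD _ _ h d; rewrite addrA subrK.
Qed.

Lemma translate_lineal_shift (C : set V) v v' : is_cone C -> lineal C (v' - v) ->
  translate (lineal C) v = translate (lineal C) v'.
Proof.
move=> cC h; apply/seteqP; split => x /translateP hx; apply/translateP.
  have := linealD cC hx (linealN h); by rewrite opprB addrA subrK.
have := linealD cC hx h; by rewrite addrA subrK.
Qed.

Lemma small_lin (c d : R) : 0 < d ->
  exists2 t, 0 < t & forall t', 0 < t' <= t -> t' * c <= d.
Proof.
move=> d0; have c1 : 0 < `|c| + 1 by rewrite ltr_wpDl.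
exists (d / (`|c| + 1)); first by rewrite divr_gt0.
move=> t' /andP[t0 tt].
have h1 : t' * c <= t' * `|c| by apply: ler_wpM2l; [exact: ltW | exact: ler_norm].
have h2 : t' * `|c| <= d / (`|c| + 1) * `|c| by rewrite ler_wpM2r.
have h3 : d / (`|c| + 1) * `|c| <= d / (`|c| + 1) * (`|c| + 1).
  by rewrite ler_wpM2l ?lerDl // divr_ge0 // ltW.
rewrite divfK ?gt_eqF // in h3; lra.
Qed.

Lemma small_t (I : finType) (P : I -> R -> Prop) :
  (forall i, exists2 t, 0 < t & forall t', 0 < t' <= t -> P i t') ->
  exists2 t, 0 < t & forall i t', 0 < t' <= t -> P i t'.
Proof.
move=> H.
suff: forall l : seq I, exists2 t, 0 < t & forall i t', i \in l -> 0 < t' <= t -> P i t'.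
  by move=> /(_ (enum I)) [t t0 Ht]; exists t => // i t'; apply: Ht; rewrite mem_enum.
elim => [|i l [t t0 Ht]]; first by exists 1.
have [t1 t10 Ht1] := H i.
exists (Order.min t t1); first by rewrite lt_min t0 t10.
move=> j t'; rewrite inE le_min => /orP[/eqP ->|jl] /andP[t'0 /andP[h1 h2]].
  by apply: Ht1; rewrite t'0 h2.
by apply: Ht => //; rewrite t'0 h1.
Qed.

Definition poly (s : seq (V * R)) : set V :=
  [set x | forall p, p \in s -> dotp p.1 x <= p.2].
Definition ca (s : seq (V * R)) (i : 'I_(size s)) : V := (nth (0, 0) s i).1.
Definition cb (s : seq (V * R)) (i : 'I_(size s)) : R := (nth (0, 0) s i).2.

Lemma polyP s x : poly s x <-> forall i : 'I_(size s), dotp (ca i) x <= cb i.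
Proof.
split => [H i|H p /(nthP (0,0)) [i ilt <-]]; first by apply: H; rewrite mem_nth.
exact: (H (Ordinal ilt)).
Qed.

Definition tightset (s : seq (V * R)) (A : {set 'I_(size s)}) : set V :=
  [set x | poly s x /\ forall i, i \in A -> dotp (ca i) x = cb i].
Definition actF s (G : set V) : {set 'I_(size s)} :=
  [set i | `[< forall x, G x -> dotp (ca i) x = cb i >]].
Arguments actF : clear implicits.

Lemma face_sub (P G : set V) : face P G -> G `<=` P.
Proof. by move=> [[u ->] _] x []. Qed.

Lemma FL s G : face (poly s) G -> G = tightset (actF s G).
Proof.
move=> [[u Gdef] [g0 Gg0]].
have GP x : G x <-> poly s x /\ forall y, poly s y -> dotp u y <= dotp u x.
  by rewrite Gdef.
have [g Gg Hg] : exists2 g, G g & forall i, i \notin actF s G -> dotp (ca i) g < cb i.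
  suff: forall l : seq 'I_(size s), exists2 g, G g &
         forall i, i \in l -> i \notin actF s G -> dotp (ca i) g < cb i.
    by move=> /(_ (enum 'I_(size s))) [g Gg Hg]; exists g => // i; apply: Hg; rewrite mem_enum.
  elim => [|i l [g Gg Hg]]; first by exists g0.
  case: (boolP (i \in actF s G)) => iA.
    by exists g => // j; rewrite inE => /orP[/eqP ->|]; [rewrite iA|apply: Hg].
  move: iA; rewrite inE => /asboolPn /existsNP [x /not_implyP [Gx nx]].
  have [Px Mx] := (GP x).1 Gx; have [Pg Mg] := (GP g).1 Gg.
  have xlt : dotp (ca i) x < cb i by rewrite lt_neqAle (polyP _ _).1 // andbT; apply/eqP.
  exists (2^-1 *: (g + x)).
    apply/GP; split.
      apply/polyP => j; rewrite dotpZr dotpDr.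
      have := (polyP _ _).1 Pg j; have := (polyP _ _).1 Px j; lra.
    move=> y Py; rewrite dotpZr dotpDr; have := Mg y Py; have := Mx y Py; lra.
  move=> j; rewrite inE dotpZr dotpDr => /orP[/eqP -> _|jl jA].
    by have := (polyP _ _).1 Pg i; lra.
  by have := Hg j jl jA; have := (polyP _ _).1 Px j; lra.
have [Pg Mg] := (GP g).1 Gg.
apply/seteqP; split => x.
  move=> Gx; split; first exact: ((GP x).1 Gx).1.
  by move=> i; rewrite inE => /asboolP; apply.
move=> [Px Tx]; apply/GP; split => //.
have Hi : forall i : 'I_(size s), exists2 t, 0 < t & forall t', 0 < t' <= t ->
    dotp (ca i) (g - t' *: (x - g)) <= cb i.
  move=> i; case: (boolP (i \in actF s G)) => iA.
    exists 1 => // t' _; rewrite dotpBr dotpZr dotpBr Tx //.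
    move: iA; rewrite inE => /asboolP /(_ g Gg) ->; lra.
  have := Hg i iA; rewrite -subr_gt0 => /(small_lin (dotp (ca i) g - dotp (ca i) x)).
  move=> [t1 t10 Ht1]; exists t1 => // t' /Ht1.
  rewrite dotpBr dotpZr dotpBr; lra.
have [t t0 Ht] := small_t Hi.
have Pz : poly s (g - t *: (x - g)) by apply/polyP => i; apply: Ht; rewrite t0 lexx.
have := Mg _ Pz; rewrite dotpBr dotpZr dotpBr => h.
have : 0 <= dotp u x - dotp u g.
  by rewrite -(pmulr_rge0 _ t0); lra.
move=> h2 y Py; have := Mg y Py; lra.
Qed.

Lemma EPS s w d : poly s w ->
  (forall i : 'I_(size s), dotp (ca i) w = cb i -> dotp (ca i) d <= 0) ->
  exists2 e, 0 < e & poly s (w + e *: d).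
Proof.
move=> Pw Hd.
have Hi : forall i : 'I_(size s), exists2 t, 0 < t & forall t', 0 < t' <= t ->
    dotp (ca i) (w + t' *: d) <= cb i.
  move=> i; have := (polyP _ _).1 Pw i; rewrite le_eqVlt => /orP[/eqP e|lt].
    exists 1 => // t' /andP[t0 _]; rewrite dotpDr dotpZr e.
    have := Hd i e => h; have : t' * dotp (ca i) d <= 0 by rewrite pmulr_rle0.
    lra.
  move: lt; rewrite -subr_gt0 => /(small_lin (dotp (ca i) d)) [t t0 Ht].
  exists t => // t' /Ht; rewrite dotpDr dotpZr; lra.
have [t t0 Ht] := small_t Hi; exists t => //; apply/polyP => i; apply: Ht.
by rewrite t0 lexx.
Qed.

Lemma TSUB s w x : poly s w -> tcone (poly s) [set w] x ->
  forall i : 'I_(size s), dotp (ca i) w = cb i -> dotp (ca i) x <= 0.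
Proof.
move=> Pw [l [Hl ->]] i e; rewrite dotp_sumr big_seq; apply: sumr_le0 => p pl.
have [p0 [v [v' [-> Pv' ->]]]] := Hl p pl.
rewrite dotpZr dotpBr e; apply: mulr_ge0_le0 => //.
by have := (polyP _ _).1 Pv' i; lra.
Qed.

Lemma TSUP s w d : poly s w ->
  (forall i : 'I_(size s), dotp (ca i) w = cb i -> dotp (ca i) d <= 0) ->
  tcone (poly s) [set w] d.
Proof.
move=> Pw Hd; have [e e0 Pe] := EPS Pw Hd.
have -> : d = e^-1 *: ((w + e *: d) - w) by rewrite addrAC subrr add0r scalerA mulVf ?gt_eqF // scale1r.
apply: cgZ; first by rewrite invr_ge0 ltW.
by apply: cg_gen; exists w, (w + e *: d).
Qed.

Lemma ZERO s w u : [set w] = [set x | poly s x /\ forall y, poly s y -> dotp u y <= dotp u x] ->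
  forall d, tcone (poly s) [set w] d -> dotp u d <= 0 /\ (dotp u d = 0 -> d = 0).
Proof.
move=> Ew d Td.
have [Pw Mw] : poly s w /\ forall y, poly s y -> dotp u y <= dotp u w.
  by have : [set w] w by []; rewrite Ew.
have [e e0 Pe] := EPS Pw (TSUB Pw Td).
have := Mw _ Pe; rewrite dotpDr dotpZr => h.
have hd : dotp u d <= 0 by rewrite -(pmulr_rle0 _ e0); lra.
split => // ud0.
have : [set w] (w + e *: d).
  rewrite Ew; split => // y Py; rewrite dotpDr dotpZr ud0 mulr0 addr0; exact: Mw.
move=> /= hz; have : e *: d = 0 by rewrite -(addKr w (e *: d)) hz addNr.
by move/eqP; rewrite scaler_eq0 gt_eqF //= => /eqP.
Qed.

Lemma pointed s w u : [set w] = [set x | poly s x /\ forall y, poly s y -> dotp u y <= dotp u x] ->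
  forall d, lineal (tcone (poly s) [set w]) d -> d = 0.
Proof.
move=> Ew d [h1 h2]; have [a1 b1] := ZERO Ew h1; have [a2 _] := ZERO Ew h2.
by apply: b1; move: a2; rewrite dotpNr; lra.
Qed.

Lemma VX s G : bounded_set (poly s) -> face (poly s) G ->
  exists2 w, G w & face (poly s) [set w].
Proof.
move=> [M HM] fG; have GT := FL fG; have [_ [g0 Gg0]] := fG.
pose act (w : V) : {set 'I_(size s)} := [set i : 'I_(size s) | dotp (ca i) w == cb i]%SET.
pose Pm m := `[< exists w, G w /\ #|act w| = m >].
have exP : exists m, Pm m by exists #|act g0|; apply/asboolP; exists g0.
have ubP : forall m, Pm m -> (m <= size s)%N.
  by move=> m /asboolP [w [_ <-]]; rewrite -[X in (_ <= X)%N]card_ord max_card.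
case: (ex_maxnP exP ubP) => m /asboolP [w [Gw <-]] Hmax.
have Pw : poly s w := face_sub fG Gw.
have Sw : forall x, poly s x -> (forall i, i \in act w -> dotp (ca i) x = cb i) -> x = w.
  move=> x Px Tx; case: (pselect (x = w)) => // nxw; exfalso; set d := x - w.
  have tdw : forall i, i \in act w -> dotp (ca i) d = 0.
    by move=> i iA; rewrite dotpBr Tx //; move: iA; rewrite inE => /eqP ->; rewrite subrr.
  case: (pselect (exists j : 'I_(size s), 0 < dotp (ca j) d)) => [[j0 hj0]|nj].
    pose F (j : 'I_(size s)) := (cb j - dotp (ca j) w) / dotp (ca j) d.
    case: (@arg_minP _ _ _ j0 (fun j => 0 < dotp (ca j) d) F hj0) => j hj jmin.
    set r := F j.
    have r0 : 0 <= r.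
      apply: divr_ge0; last exact: ltW.
      by rewrite subr_ge0; exact: (polyP _ _).1 Pw j.
    have rj : r * dotp (ca j) d = cb j - dotp (ca j) w by rewrite /r /F divfK ?gt_eqF.
    set z := w + r *: d.
    have Pz : poly s z.
      apply/polyP => i; rewrite dotpDr dotpZr.
      case: (ltP 0 (dotp (ca i) d)) => h.
        have := jmin i h; rewrite -/r /F ler_pdivlMr // => h'; lra.
      have := (polyP _ _).1 Pw i => h2.
      have : r * dotp (ca i) d <= 0 by apply: mulr_ge0_le0.
      lra.
    have Gz : G z.
      rewrite GT; split => // i iA.
      have iw : i \in act w.
        by rewrite inE in iA; move/asboolP: iA => /(_ _ Gw) h; rewrite inE h.
      rewrite dotpDr dotpZr tdw // mulr0 addr0; move: iw; rewrite inE => /eqP //.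
    have : act w \proper act z.
      apply/properP; split.
        apply/fintype.subsetP => i iw; rewrite inE dotpDr dotpZr tdw // mulr0 addr0.
        by move: iw; rewrite inE.
      exists j; first by rewrite inE dotpDr dotpZr rj addrC subrK.
      by apply/negP => /tdw h0; move: hj; rewrite h0 ltxx.
    move/proper_card; rewrite ltnNge; move/negP; apply.
    by apply: Hmax; apply/asboolP; exists z.
  have nj' : forall j : 'I_(size s), dotp (ca j) d <= 0.
    by move=> j; rewrite leNgt; apply/negP => h; apply: nj; exists j.
  have Pt : forall t, 0 <= t -> poly s (w + t *: d).
    move=> t t0; apply/polyP => i; rewrite dotpDr dotpZr.
    have := (polyP _ _).1 Pw i; have : t * dotp (ca i) d <= 0 by apply: mulr_ge0_le0.
    lra.
  have [i di] : exists i, d ord0 i != 0.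
    case: (pselect (exists i, d ord0 i != 0)) => // H; exfalso; apply: nxw.
    apply/eqP; rewrite -subr_eq0; apply/eqP/rowP => i; rewrite [RHS]mxE.
    by case: (eqVneq (d ord0 i) 0) => // h; exfalso; apply: H; exists i.
  have M0 : `|w ord0 i| <= M := HM w Pw i.
  have dpos : 0 < `|d ord0 i| by rewrite normr_gt0.
  pose t := (M + `|w ord0 i| + 1) / `|d ord0 i|.
  have t0 : 0 <= t by rewrite divr_ge0 // ?ltW //; have := normr_ge0 (w ord0 i); lra.
  have h : `|w ord0 i + t * d ord0 i| <= M.
    by have := HM _ (Pt t t0) i; rewrite !mxE.
  have e1 : `|t * d ord0 i| = M + `|w ord0 i| + 1.
    by rewrite normrM ger0_norm // /t divfK // gt_eqF.
  have e2 : `|t * d ord0 i| <= `|w ord0 i + t * d ord0 i| + `|w ord0 i|.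
    have := ler_normD (w ord0 i + t * d ord0 i) (- w ord0 i); rewrite normrN.
    by have -> : w ord0 i + t * d ord0 i + - w ord0 i = t * d ord0 i by rewrite addrC addKr.
  move: (w ord0 i) (t * d ord0 i) h e1 e2 M0 => a b h e1 e2 M0.
  clear -h e1 e2 M0; lra.
exists w => //; split; last by exists w.
exists (\sum_(i in act w) ca i); apply/seteqP; split => x /=.
  move=> ->; split => // y Py; rewrite !dotp_suml; apply: ler_sum => i.
  by rewrite inE => /eqP ->; exact: (polyP _ _).1 Py i.
move=> [Px Mx]; apply: Sw => //.
have := Mx w Pw; rewrite !dotp_suml => h.
have hs : \sum_(i in act w) (cb i - dotp (ca i) x) = 0.
  apply/eqP; rewrite eq_le; apply/andP; split.
    rewrite sumrB subr_le0; apply: le_trans h; rewrite le_eqVlt; apply/orP; left.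
    by apply/eqP; apply: eq_bigr => i; rewrite inE => /eqP.
  by apply: sumr_ge0 => i _; rewrite subr_ge0; exact: (polyP _ _).1 Px i.
move=> i iA; apply/eqP; rewrite eq_sym -subr_eq0; apply/eqP.
move: i iA; apply/psumr_eq0P => // i _.
by rewrite subr_ge0; exact: (polyP _ _).1 Px i.
Qed.

Lemma faces_fin s : finite_set (face (poly s)).
Proof.
apply: (@sub_finite_set _ _ ((fun A => tightset A) @` [set: {set 'I_(size s)}])).
  by move=> G fG; exists (actF s G) => //; rewrite -FL.
exact: finite_image.
Qed.

Lemma vert_fin s : finite_set (Vert (poly s)).
Proof.
apply: (@sub_finite_set _ _ ((fun A => xget 0 (tightset A)) @` [set: {set 'I_(size s)}])).
  move=> v fv; exists (actF s [set v]) => //; rewrite -FL //.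
  by apply: xget_unique.
exact: finite_image.
Qed.

Lemma PW s (P : set V) w : face (poly s) [set w] -> coarsens P (poly s) ->
  fan_support (poly s) `<=` fan_support P ->
  exists p, [/\ P p, forall x, P x -> tcone (poly s) [set w] (x - p) & face P [set p]].
Proof.
move=> fw co fs; have [[u Ew] _] := fw.
have [Pw Mw] : poly s w /\ forall y, poly s y -> dotp u y <= dotp u w.
  by have : [set w] w by []; rewrite Ew.
have fsu : fan_support (poly s) u.
  exists (ncone (poly s) [set w]); split; first by exists [set w].
  by move=> x y -> Py; exact: Mw.
have [N [[F [fF ->]] NFu]] := fs _ fsu.
have [S [SQ NE]] := co _ (ex_intro _ F (conj fF erefl)).
have : [set u0 | exists K, S K /\ K u0] u by rewrite -NE.
move=> [K [SK Ku]]; have [G [fG KE]] := SQ _ SK.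
have gw : forall x, G x -> x = w.
  move=> x Gx; have : [set w] x; last by [].
  rewrite Ew; split; first exact: face_sub fG x Gx.
  by move=> y Py; move: Ku; rewrite KE => /(_ x y Gx Py).
have Gw : G = [set w].
  have [_ [g Gg]] := fG; apply/seteqP; split => x; first by move/gw.
  by move=> /= ->; rewrite -(gw g Gg).
have aiN : forall i : 'I_(size s), dotp (ca i) w = cb i -> ncone P F (ca i).
  move=> i ei; rewrite NE; exists K; split => //; rewrite KE Gw => x y -> Py.
  by rewrite ei; exact: (polyP _ _).1 Py i.
have [_ [p Fp]] := fF; have Pp := face_sub fF Fp.
have Tp : forall x, P x -> tcone (poly s) [set w] (x - p).
  move=> x Px; apply: TSUP => // i ei; rewrite dotpBr subr_le0.
  exact: (aiN i ei).
exists p; split => //.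
have uN : ncone P F u by rewrite NE; exists K.
split; last by exists p.
exists u; apply/seteqP; split => x /=.
  by move=> ->; split => // y Py; exact: uN.
move=> [Px Mx]; have := Mx p Pp => h.
have [h1 h2] := ZERO Ew (Tp x Px).
apply/eqP; rewrite -subr_eq0; apply/eqP; apply: h2.
by move: h1; rewrite dotpBr; lra.
Qed.

Lemma sum1 (l : seq V) p (a : int) : uniq l -> p \in l ->
  \sum_(u <- l) (if u == p then a else 0) = a.
Proof.
move=> ul pl; rewrite -big_mkcond -big_filter.
have -> : [seq u <- l | u == p] = [:: p] by rewrite -(filter_pred1_uniq ul pl); apply: eq_filter => u.
by rewrite big_seq1.
Qed.

Lemma zspan0 (S : set (set V)) : zspan S (fun _ => 0).
Proof. by exists [::]; split => //; apply: funext => x; rewrite big_nil. Qed.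

Lemma zspanN (S : set (set V)) g : zspan S g -> zspan S (fun x => - g x).
Proof.
move=> [l [Hl ->]]; exists [seq (- p.1, p.2) | p <- l]; split.
  by move=> p /mapP [q /Hl ? ->].
apply: funext => x; rewrite big_map -sumrN; apply: eq_bigr => p _; by rewrite mulNr.
Qed.

Lemma zspan1 (S : set (set V)) c P : S P -> zspan S (fun x => c * indic P x).
Proof.
move=> SP; exists [:: (c, P)]; split; first by move=> p; rewrite inE => /eqP ->.
by apply: funext => x; rewrite big_seq1.
Qed.

Lemma zspanD (S : set (set V)) f g : zspan S f -> zspan S g -> zspan S (fun x => f x + g x).
Proof.
move=> [l1 [H1 ->]] [l2 [H2 ->]]; exists (l1 ++ l2); split.
  by move=> p; rewrite mem_cat => /orP[/H1|/H2].
by apply: funext => x; rewrite big_cat.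
Qed.

Lemma lincomb (S : set (set V)) (L : (V -> int) -> (set V -> int)) (t : set V -> set V -> int) :
  (forall f g, zspan S f -> zspan S g -> L (fun x => f x - g x) = (fun K => L f K - L g K)) ->
  (forall P, S P -> L (indic P) = t P) ->
  forall l : seq (int * set V), (forall p, p \in l -> S p.2) ->
  L (fun x => \sum_(p <- l) p.1 * indic p.2 x) = (fun K => \sum_(p <- l) p.1 * t p.2 K).
Proof.
move=> Hl Ht.
have L0 : L (fun _ => 0) = fun _ => 0.
  have := Hl _ _ (zspan0 S) (zspan0 S).
  have -> : (fun _ : V => (0 : int) - 0) = fun _ => 0 by apply: funext => x; rewrite subrr.
  by move=> e; apply: funext => K; rewrite e subrr.
have LN : forall g, zspan S g -> L (fun x => - g x) = fun K => - L g K.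
  move=> g zg; have := Hl _ _ (zspan0 S) zg.
  have -> : (fun x => (0 : int) - g x) = fun x => - g x by apply: funext => x; rewrite sub0r.
  by move=> ->; apply: funext => K; rewrite L0 sub0r.
have LD : forall f g, zspan S f -> zspan S g -> L (fun x => f x + g x) = fun K => L f K + L g K.
  move=> f g zf zg; have := Hl _ _ zf (zspanN zg).
  have -> : (fun x => f x - - g x) = fun x => f x + g x by apply: funext => x; rewrite opprK.
  by move=> ->; apply: funext => K; rewrite LN // opprK.
have LZ : forall (c : int) P, S P -> L (fun x => c * indic P x) = fun K => c * t P K.
  move=> c P SP.
  have LP : forall m : nat, L (fun x => (m%:Z) * indic P x) = fun K => m%:Z * t P K.
    elim => [|m IH].
      have -> : (fun x => (0%:Z) * indic P x) = fun _ => 0 by apply: funext => x; rewrite mul0r.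
      by rewrite L0; apply: funext => K; rewrite mul0r.
    have -> : (fun x => (m.+1%:Z) * indic P x) = fun x => m%:Z * indic P x + indic P x.
      by apply: funext => x; rewrite intS mulrDl mul1r addrC.
    rewrite LD ?IH ?Ht //; last by have := zspan1 1 SP; rewrite (_ : (fun x => 1 * indic P x) = indic P) //; apply: funext => x; rewrite mul1r.
      by apply: funext => K; rewrite intS mulrDl mul1r addrC.
    exact: zspan1.
  case: c => m; first exact: LP.
  rewrite NegzE.
  have -> : (fun x => - (m.+1%:Z) * indic P x) = fun x => - ((m.+1%:Z) * indic P x).
    by apply: funext => x; rewrite mulNr.
  by rewrite LN ?LP; [apply: funext => K; rewrite mulNr | exact: zspan1].
elim => [|[c P] l IH] Hs.
  have -> : (fun x => \sum_(p <- [::]) p.1 * indic p.2 x) = fun _ => 0.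
    by apply: funext => x; rewrite big_nil.
  by rewrite L0; apply: funext => K; rewrite big_nil.
have SP : S P by apply: (Hs (c, P)); rewrite mem_head.
have Hs' : forall p, p \in l -> S p.2 by move=> p pl; apply: Hs; rewrite inE pl orbT.
have -> : (fun x => \sum_(p <- (c, P) :: l) p.1 * indic p.2 x) =
          fun x => c * indic P x + \sum_(p <- l) p.1 * indic p.2 x.
  by apply: funext => x; rewrite big_cons.
rewrite LD ?LZ ?IH //; first by apply: funext => K; rewrite big_cons.
  exact: zspan1.
by exists l.
Qed.

End S.

Unset Implicit Arguments.

Theorem proposition2p9 (R : realType) (n : nat) (Q VV : set 'rV[R]_n)
  (FV F : ('rV[R]_n -> int) -> (set 'rV[R]_n -> int)) :
  polytope Q ->
  (exists Q0, Def Q Q0 /\ VV = Vert Q0) ->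
  (* F_VV : I(Def(Q)|_VV) -> Z^{X_VV} is Z-linear and given on generators *)
  (forall f g, zspan (Def_restr Q VV) f -> zspan (Def_restr Q VV) g ->
     FV (fun x => f x - g x) = (fun K => FV f K - FV g K)) ->
  (forall P, Def_restr Q VV P -> FV (indic P) = tight_vec Q (XV Q VV) P) ->
  (* F : I(Def^+(Q)) -> Z^{(+) tran} is Z-linear and given on generators *)
  (forall f g, zspan (Defp Q) f -> zspan (Defp Q) g ->
     F (fun x => f x - g x) = (fun K => F f K - F g K)) ->
  (forall P, Defp Q P -> F (indic P) = tight_vec Q (tran Q) P) ->
  exists E : (set 'rV[R]_n -> int) -> (set 'rV[R]_n -> int),
    [/\ (forall g, ZX (XV Q VV) g -> ZXfin (tran Q) (E g)),
        (forall g h, ZX (XV Q VV) g -> ZX (XV Q VV) h ->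
           E (fun K => g K - h K) = (fun K => E g K - E h K)),
        (forall g h, ZX (XV Q VV) g -> ZX (XV Q VV) h -> E g = E h -> g = h) &
        (forall f, zspan (Def_restr Q VV) f -> E (FV f) = F f)].
Proof.
move=> [[s Qs] bQ _] [Q0 [[[[s0 Q0s] _ _] _] VVE]] HFVl HFV HFl HF.
have QE : Q = poly s by [].
clear Qs; subst Q.
have VVfin : finite_set VV.
  by rewrite VVE (_ : Q0 = poly s0) //; exact: vert_fin.
have [l0 VVl0] := (finite_seqP VV).1 VVfin.
pose l := undup l0.
have VVl : forall u, VV u <-> u \in l.
  by move=> u; rewrite /l mem_undup VVl0.
have ul : uniq l := undup_uniq l0.
have XVtran : forall K, XV (poly s) VV K -> tran (poly s) K.
  move=> K [C [v [[w [fw ->]] _ ->]]]; exists (tcone (poly s) [set w]), v; split => //.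
  by exists [set w].
have dfcone : forall C, dual_fan (poly s) C -> is_cone C.
  by move=> C [G [_ ->]]; exact: cg_cone.
pose Good (K : set 'rV[R]_n) (t : set 'rV[R]_n * 'rV[R]_n * 'rV[R]_n) :=
  [/\ dual_fan (poly s) t.1.1, K = translate t.1.1 t.1.2, face (poly s) [set t.2] &
      tcone (poly s) [set t.2] `<=` t.1.1].
have exGood : forall K, tran (poly s) K -> exists t, Good K t.
  move=> K [C [v [[G [fG eC] eK]]]].
  have [w Gw fw] := VX bQ fG.
  exists (C, v, w); split => //=; first by exists G.
  rewrite eC; apply: cg_mono => d [v1 [v' [/= -> Pv' ->]]].
  by exists w, v'.
pose data K := match pselect (exists t, Good K t) with
  | left h => proj1_sig (cid h) | right _ => (set0, 0, 0) end.
have dataP : forall K, tran (poly s) K -> Good K (data K).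
  move=> K tK; rewrite /data; case: pselect => [h|h].
    exact: (proj2_sig (cid h)).
  by exfalso; exact: h (exGood K tK).
pose E (g : set 'rV[R]_n -> int) K :=
  if `[< XV (poly s) VV K >] then g K else
  if `[< tran (poly s) K >] then
    \sum_(u <- l) (if `[< lineal (data K).1.1 (u - (data K).1.2) >]
                   then g (translate (tcone (poly s) [set (data K).2]) u) else 0)
  else 0.
exists E; split.
- move=> g Zg; split.
    move=> K nK; rewrite /E asboolF; last by move/XVtran.
    by rewrite asboolF.
  have dffin : finite_set (dual_fan (poly s)).
    apply: (@sub_finite_set _ _ ((tcone (poly s)) @` face (poly s))).
      by move=> C [G [fG ->]]; exists G.
    exact/finite_image/faces_fin.
  apply: (@sub_finite_set _ _ [set translate C u | C in dual_fan (poly s) & u in VV]);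
    last exact: finite_image2.
  move=> K /= nz; rewrite /E in nz.
  case: (pselect (XV (poly s) VV K)) => [[C [v [[w [fw eC]] Vv eK]]]|nX].
    by exists C; [rewrite eC; exists [set w]|exists v].
  move: nz; rewrite asboolF //.
  case: (pselect (tran (poly s) K)) => tK; last by rewrite asboolF.
  rewrite asboolT //; have := dataP K tK.
  case: (data K) => [[C v] w] /= [dC eK fw sub] nz.
  case: (pselect (exists2 u, u \in l & lineal C (u - v))) => [[u uin lu]|H].
    exists C => //; exists u; first exact/VVl.
    by rewrite eK (translate_shift (dfcone _ dC) lu).
  exfalso; move: nz; rewrite big1_seq ?eqxx // => u /andP[_ uin].
  by rewrite asboolF // => h; apply: H; exists u.
- move=> g h _ _; apply: funext => K; rewrite /E.
  case: ifP => _ //; case: ifP => _; last by rewrite subr0.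
  rewrite -sumrB; apply: eq_bigr => u _; case: ifP => _ //; by rewrite subr0.
- move=> g h Zg Zh e; apply: funext => K.
  case: (pselect (XV (poly s) VV K)) => xk; last by rewrite Zg // Zh.
  by have := congr1 (fun F => F K) e; rewrite /E asboolT.
move=> f [ls [Hls ->]].
have Hls' : forall p, p \in ls -> Defp (poly s) p.2.
  by move=> p /Hls [[]].
rewrite (lincomb HFVl HFV Hls) (lincomb HFl HF Hls').
apply: funext => K.
have Elin : forall h : int * set 'rV[R]_n -> set 'rV[R]_n -> int,
    E (fun K => \sum_(p <- ls) p.1 * h p K) K = \sum_(p <- ls) p.1 * E (h p) K.
  move=> h; rewrite /E; case: ifP => _ //; case: ifP => _; last first.
    by rewrite big1 // => p _; rewrite mulr0.
  transitivity (\sum_(u <- l) \sum_(p <- ls)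
     (if `[< lineal (data K).1.1 (u - (data K).1.2) >]
      then p.1 * h p (translate (tcone (poly s) [set (data K).2]) u) else 0)).
    apply: eq_bigr => u _; case: ifP => _ //.
    by rewrite big1 // => p _.
  rewrite exchange_big; apply: eq_bigr => p _; rewrite mulr_sumr.
  by apply: eq_bigr => u _; case: ifP => _ //; rewrite mulr0.
rewrite Elin; apply: eq_big_seq => p /Hls; case: p => c P /= DP; congr (_ * _).
move: DP => [[[PP neP coP] fsP] PQ VP].
rewrite /E; case: (pselect (XV (poly s) VV K)) => xk.
  rewrite asboolT // /tight_vec; congr (if _ then _ else _); apply: asbool_equiv_eq.
  by split => [[_ h]|[_ h]]; split => //; exact: XVtran.
rewrite asboolF //.
case: (pselect (tran (poly s) K)) => tk; last first.
  by rewrite asboolF // /tight_vec asboolF // => [[]].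
rewrite asboolT //; have := dataP K tk.
case: (data K) => [[C v] w] /= [dC eK fw sub].
have [[u0 Ew] _] := fw; rewrite /= in Ew.
have fsub : fan_support (poly s) `<=` fan_support P by rewrite fsP.
have [p [Pp Tp fp]] := PW fw coP fsub.
have Vp : VV p := VP p fp.
have cw := cg_cone [set w0 | exists v0 v', [/\ [set w] v0, poly s v' & w0 = v' - v0]].
have pw := pointed Ew.
have g_eq : forall u, VV u -> tight_vec (poly s) (XV (poly s) VV) P
      (translate (tcone (poly s) [set w]) u) = if u == p then 1 else 0.
  move=> u Vu; rewrite /tight_vec; case: eqP => [->|nup].
    rewrite asboolT //; split.
      by exists (tcone (poly s) [set w]), p; split => //; exists w.
    exists (tcone (poly s) [set w]), p; split => //; first by exists [set w].
      by move=> x Px; apply/translateP; exact: Tp.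
    exists p; split => //; apply/translateP; rewrite subrr; split; first exact: cg0.
    by rewrite oppr0; exact: cg0.
  rewrite asboolF // => [[_ [C' [v' [dC' eq' sub' [q [Pq lq]]]]]]].
  have [eC l'] := translate_eq cw (dfcone _ dC') eq'.
  rewrite -eC in l' lq sub'.
  have v'u : v' = u by apply/eqP; rewrite -subr_eq0; apply/eqP; apply: pw l'.
  have qv : q = v'.
    by move/translateP: lq => /pw /eqP; rewrite subr_eq0 => /eqP.
  subst v' q.
  have h1 := Tp u Pq; have /translateP h2 := sub' p Pp.
  apply: nup; apply/eqP; rewrite -subr_eq0; apply/eqP; apply: pw; split => //.
  by rewrite opprB.
have -> : \sum_(u <- l) (if `[< lineal C (u - v) >]
            then tight_vec (poly s) (XV (poly s) VV) P (translate (tcone (poly s) [set w]) u)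
            else 0) = \sum_(u <- l) (if u == p then (if `[< lineal C (p - v) >] then 1 else 0) else 0).
  apply: eq_big_seq => u /VVl Vu; rewrite g_eq //.
  by case: eqP => [->|_]; case: ifP.
rewrite sum1 //; last exact/VVl.
have [_ CD _] := dfcone _ dC.
rewrite /tight_vec; congr (if _ then _ else _); apply: asbool_equiv_eq; split.
  move=> lp; split => //; exists C, v; split => //.
    move=> x Px; rewrite eK; apply/translateP.
    have -> : x - v = (x - p) + (p - v) by rewrite addrA subrK.
    by apply: CD; [apply: sub; exact: Tp | exact: lp.1].
  by exists p; split => //; apply/translateP.
move=> [_ [C' [v' [dC' eq' sub' [q [Pq lq]]]]]].
have [eC l'] := translate_eq (dfcone _ dC) (dfcone _ dC') (etrans (esym eK) eq').
rewrite eq' in sub'; rewrite -eC in l' lq sub'.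
move/translateP: lq => lq; have /translateP h2 := sub' p Pp.
have lp' : lineal C (p - v').
  split => //.
  have -> : - (p - v') = (v' - q) + (q - p) by rewrite opprB addrA subrK.
  apply: CD; first by move: lq.2; rewrite opprB.
  by apply: sub; exact: Tp.
have -> : p - v = (p - v') + (v' - v) by rewrite addrA subrK.
exact: linealD (dfcone _ dC) lp' l'.
Qed.
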